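(* Let $\mathcal C\subseteq\mathbb F_2^n$ be a binary linear code with error correcting capability $t$, $\prec$ an admissible order, and $(N,G)$ the output of Algorithm R for $\mathcal C$ and $<_e$. Let $w\in[X]$ and let $\mathrm{Can}(w,G)$ be an irreducible word obtained from $w$ by a finite sequence of one-step reductions modulo $G$. If $\mathrm{weight}(\psi(\mathrm{Can}(w,G)))\le t$, then $\psi(w)\in B(\mathcal C,t)$ and $\psi(\mathrm{Can}(w,G))$ is the error vector of $\psi(w)$, i.e. the unique $e\in\mathbb F_2^n$ with $\mathrm{weight}(e)\le t$ and $\psi(w)-e\in\mathcal C$. If $\mathrm{weight}(\psi(\mathrm{Can}(w,G)))>t$, then $\psi(w)$ contains more than $t$ errors, i.e. $\psi(w)\notin B(\mathcal C,t)$.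
   Context: Binary setting: $[X]$ is the free commutative monoid on $X=\{x_1,\dots,x_n\}$; $\psi(\prod x_i^{\beta_i})=(\beta_i\bmod 2)_i\in\mathbb F_2^n$; $\mathcal C$ has dimension $k$ and parity check matrix $H$ ($n\times(n-k)$, $\mathcal C=\{c:cH=0\}$); syndrome $\xi(w)=\psi(w)H$. Weight is Hamming weight, $d$ the minimum distance, $t=\lfloor(d-1)/2\rfloor$, and $B(\mathcal C,t)=\{y\in\mathbb F_2^n:\exists c\in\mathcal C,\ d(c,y)\le t\}$. $\mathrm{Ind}(w)=\{i:x_i\mid w\}$; error-vector order: $u<_e w$ iff $|\mathrm{Ind}(u)|<|\mathrm{Ind}(w)|$, or equality and $u\prec w$. Algorithm R: list $L$ sorted increasingly by $<_e$, set $N$, set $G$ of binomials; initially $L=(1)$, $N=G=\emptyset$. While $L\ne\emptyset$: remove the $<_e$-smallest $w$; if $w$ is divisible by the leading word of a binomial in $G$, discard it; otherwise if some $w'\in N$ has $\xi(w')=\xi(w)$, add $w-w'$ to $G$ with leading word $w$; else add $w$ to $N$ and insert all $wx$ ($x\in X$) into $L$. Output $(N,G)$. One-step reduction modulo $G$: a non-standard word (some exponent $\ge 2$) reduces to its standard form (exponents mod 2); a standard word $w=us$ with $u-u'\in G$ of leading word $u$ reduces to $u's$. Irreducible means no reduction applies. *)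

(* Defs.v *)
From mathcomp Require Import all_boot all_order all_algebra.
Set Implicit Arguments. Unset Strict Implicit. Unset Printing Implicit Defensive.
Import GRing.Theory.
Local Open Scope ring_scope.

(* A word prod x_i^(beta_i) is represented by its exponent vector beta. *)
Definition word (n : nat) := {ffun 'I_n -> nat}.

Definition wone n : word n := [ffun => 0%N].
Definition wmul n (u v : word n) : word n := [ffun i => (u i + v i)%N].
Definition wvar n (i : 'I_n) : word n := [ffun j => nat_of_bool (j == i)].
Definition wdvd n (u w : word n) : bool := [forall i, (u i <= w i)%N].
Definition Ind n (w : word n) : {set 'I_n} := [set i | (0 < w i)%N].
Definition wstandard n (w : word n) : bool := [forall i, (w i <= 1)%N].
Definition wstd n (w : word n) : word n := [ffun i => (w i %% 2)%N].

Definition psi n (w : word n) : 'rV['F_2]_n := \row_i ((w i %% 2)%N)%:R.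

Definition code n m (H : 'M['F_2]_(n, m)) : pred 'rV['F_2]_n :=
  [pred c | c *m H == 0].

Definition syndrome n m (H : 'M['F_2]_(n, m)) (w : word n) : 'rV['F_2]_m :=
  psi w *m H.

Definition wt n (v : 'rV['F_2]_n) : nat := #|[set i | v 0 i != 0]|.
Definition hdist n (u v : 'rV['F_2]_n) : nat := wt (u - v).

Definition is_min_distance n m (H : 'M['F_2]_(n, m)) (d : nat) : Prop :=
  (exists2 c, c \in code H & (c != 0) && (wt c == d)) /\
  (forall c, c \in code H -> c != 0 -> (d <= wt c)%N).

Definition in_ball n m (H : 'M['F_2]_(n, m)) (t : nat) (y : 'rV['F_2]_n) : Prop :=
  exists2 c, c \in code H & (hdist c y <= t)%N.

Definition admissible n (prec : rel (word n)) : Prop :=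
  [/\ (forall u, ~~ prec u u),
      (forall u v w, prec u v -> prec v w -> prec u w),
      (forall u v, u != v -> prec u v || prec v u),
      (forall u v w, prec u v -> prec (wmul u w) (wmul v w)) &
      (forall w, w != wone n -> prec (wone n) w)].

Definition lt_e n (prec : rel (word n)) (u w : word n) : bool :=
  (#|Ind u| < #|Ind w|)%N || ((#|Ind u| == #|Ind w|) && prec u w).

(* state: (L, N, G); a binomial lead - other is stored as the pair (lead, other) *)
Definition stateR n := (seq (word n) * seq (word n) * seq (word n * word n))%type.

Definition is_min_in n (prec : rel (word n)) (w : word n) (L : seq (word n)) :=
  (w \in L) && all (fun u => (u == w) || lt_e prec w u) L.

Inductive stepR n m (H : 'M['F_2]_(n, m)) (prec : rel (word n)) :
  stateR n -> stateR n -> Prop :=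
| stepR_discard L N G w :
    is_min_in prec w L -> has (fun g => wdvd g.1 w) G ->
    stepR H prec (L, N, G) (filter (predC1 w) L, N, G)
| stepR_binomial L N G w w' :
    is_min_in prec w L -> ~~ has (fun g => wdvd g.1 w) G ->
    w' \in N -> syndrome H w' = syndrome H w ->
    stepR H prec (L, N, G) (filter (predC1 w) L, N, rcons G (w, w'))
| stepR_new L N G w :
    is_min_in prec w L -> ~~ has (fun g => wdvd g.1 w) G ->
    ~~ has (fun w' => syndrome H w' == syndrome H w) N ->
    stepR H prec (L, N, G)
      (undup (filter (predC1 w) L ++ [seq wmul w (wvar i) | i <- enum 'I_n]),
       rcons N w, G).

Inductive star (A : Type) (R : A -> A -> Prop) : A -> A -> Prop :=
| star_refl a : star R a a
| star_step a b c : R a b -> star R b c -> star R a c.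

Definition algR_output n m (H : 'M['F_2]_(n, m)) (prec : rel (word n))
    (N : seq (word n)) (G : seq (word n * word n)) : Prop :=
  star (stepR H prec) ([:: wone n], [::], [::]) ([::], N, G).

Inductive red1 n (G : seq (word n * word n)) : word n -> word n -> Prop :=
| red1_std w : ~~ wstandard w -> red1 G w (wstd w)
| red1_bin u u' s : wstandard (wmul u s) -> (u, u') \in G ->
    red1 G (wmul u s) (wmul u' s).

Definition irreducible n (G : seq (word n * word n)) (w : word n) : Prop :=
  forall v, ~ red1 G w v.

Definition is_Can n (G : seq (word n * word n)) (w c : word n) : Prop :=
  star (red1 G) w c /\ irreducible G c.

(* Main.v *)
Require Import Defs.
From mathcomp Require Import all_boot all_order all_algebra.
From mathcomp Require Import zify.
Set Implicit Arguments. Unset Strict Implicit. Unset Printing Implicit Defensive.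
Import GRing.Theory.
Local Open Scope ring_scope.



Section Words.
Variable n : nat.
Implicit Types u v w x y s : word n.

Lemma wmulC u v : wmul u v = wmul v u.
Proof. by apply/ffunP=> i; rewrite !ffunE addnC. Qed.
Lemma wmul1 u : wmul (wone n) u = u.
Proof. by apply/ffunP=> i; rewrite !ffunE. Qed.

Lemma F2_nat k : ((k %% 2)%N%:R : 'F_2) = k%:R.
Proof. by rewrite Fp_nat_mod. Qed.

Lemma psi_mul u v : psi (wmul u v) = psi u + psi v.
Proof. by apply/rowP=> i; rewrite !mxE !ffunE !F2_nat natrD. Qed.

Lemma psi_std u : psi (wstd u) = psi u.
Proof. by apply/rowP=> i; rewrite !mxE !ffunE modn_mod. Qed.

Lemma wstd_standard u : wstandard (wstd u).
Proof. by apply/forallP=> i; rewrite ffunE -ltnS ltn_mod. Qed.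

Lemma Ind_mul u v : Ind (wmul u v) = Ind u :|: Ind v.
Proof. by apply/setP=> i; rewrite !inE ffunE addn_gt0. Qed.

Lemma card_Ind_mul u v : (#|Ind (wmul u v)| <= #|Ind u| + #|Ind v|)%N.
Proof. by rewrite Ind_mul cardsU leq_subr. Qed.

Lemma card_Ind_mul_std u v : wstandard (wmul u v) ->
  #|Ind (wmul u v)| = (#|Ind u| + #|Ind v|)%N.
Proof.
move=> /forallP st; rewrite Ind_mul cardsU.
suff -> : Ind u :&: Ind v = set0 by rewrite cards0 subn0.
apply/setP=> i; rewrite !inE; have := st i; rewrite ffunE.
by case: (u i) => [|[|k]] //=; case: (v i).
Qed.

Lemma Ind_std_sub u : (#|Ind (wstd u)| <= #|Ind u|)%N.
Proof.
apply: subset_leq_card; apply/subsetP=> i; rewrite !inE ffunE.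
by case: (u i).
Qed.

Lemma wdvd_mul u w : wdvd u w -> w = wmul u [ffun i => (w i - u i)%N].
Proof.
move=> /forallP d; apply/ffunP=> i; rewrite !ffunE subnKC //.
Qed.

End Words.



Section Order.
Variable n : nat.
Variable prec : rel (word n).
Hypothesis adm : admissible prec.
Implicit Types u v w x y s : word n.

Notation lte := (lt_e prec).

Lemma lte_irr u : ~~ lte u u.
Proof. case: adm => irr _ _ _ _; by rewrite /lt_e ltnn eqxx (negbTE (irr u)). Qed.

Lemma lte_trans u v w : lte u v -> lte v w -> lte u w.
Proof.
case: adm => _ tr _ _ _; rewrite /lt_e.
case/orP=> [h1|/andP[/eqP e1 p1]]; case/orP=> [h2|/andP[/eqP e2 p2]].
- by rewrite (ltn_trans h1 h2).
- by rewrite -e2 h1.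
- by rewrite e1 h2.
- by rewrite e1 e2 eqxx (tr _ _ _ p1 p2) orbT.
Qed.

Lemma lte_mulr x y : y != wone n -> lte x (wmul x y).
Proof.
case: adm => _ _ _ mono one => ny.
have hp : prec x (wmul x y).
  by have := mono _ _ x (one _ ny); rewrite wmul1 wmulC.
rewrite /lt_e; have := card_Ind_mul x y.
have sub : (#|Ind x| <= #|Ind (wmul x y)|)%N.
  by apply: subset_leq_card; apply/subsetP=> i hi; by rewrite Ind_mul inE hi.
rewrite leq_eqVlt in sub; case/orP: sub => [/eqP->|->] //; by rewrite ltnn eqxx hp.
Qed.

Lemma lte_std x : x = wstd x \/ lte (wstd x) x.
Proof.
have -> : x = wmul (wstd x) [ffun i => (x i - x i %% 2)%N] :> word n.
  by apply/ffunP=> i; rewrite !ffunE subnKC // leq_mod.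
set y := [ffun _ => _].
case: (eqVneq y (wone n)) => [->|ny].
  left; apply/ffunP=> i; rewrite !ffunE addn0 modn_mod //.
right.
have -> : wstd (wmul (wstd x) y) = wstd x.
  apply/ffunP=> i; rewrite !ffunE subnKC ?leq_mod //.
by apply: lte_mulr.
Qed.

Lemma lte_mul_std u' u s : lte u' u -> wstandard (wmul u s) ->
  lte (wstd (wmul u' s)) (wmul u s).
Proof.
case: adm => _ _ _ mono _ => h st.
have h2 : lte (wmul u' s) (wmul u s).
  have c1 := card_Ind_mul u' s; have c2 := card_Ind_mul_std st.
  move: h; rewrite /lt_e c2.
  case/orP=> [lt|/andP[/eqP e p]].
    by apply/orP; left; apply: leq_ltn_trans c1 _; rewrite ltn_add2r.
  rewrite e in c1; rewrite leq_eqVlt in c1; case/orP: c1 => [/eqP->|->] //.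
  by rewrite ltnn eqxx (mono _ _ _ p).
by case: (lte_std (wmul u' s)) => [<-|h3] //; apply: lte_trans h3 h2.
Qed.

End Order.



Section Alg.
Variables n m : nat.
Variable H : 'M['F_2]_(n, m).
Variable prec : rel (word n).
Hypothesis adm : admissible prec.
Notation lte := (lt_e prec).
Notation syn := (syndrome H).

Definition invR (S : stateR n) := let: (L, N, G) := S in
 [/\ (forall a b, a \in N -> b \in L -> lte a b),
     (forall a b, a \in N -> b \in N -> syn a = syn b -> a = b) &
     (forall g, g \in G -> [/\ g.2 \in N, syn g.2 = syn g.1 & lte g.2 g.1])].

Lemma min_inP w L b : is_min_in prec w L -> b \in L -> b != w -> lte w b.
Proof. by case/andP=> _ /allP al /al /orP[->|]. Qed.

Lemma inv_step S S' : stepR H prec S S' -> invR S -> invR S'.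
Proof.
case=> {S S'} [L N G w mn _|L N G w w' mn _ w'N sy|L N G w mn _ nh] [i1 i2 i3].
- split=> // a b aN; rewrite mem_filter => /andP[_ bL]; exact: i1.
- split=> //.
    by move=> a b aN; rewrite mem_filter => /andP[_ bL]; exact: i1.
  move=> g; rewrite mem_rcons inE => /orP[/eqP->|gG]; last exact: i3.
  split=> //=; apply: i1 w'N _; by case/andP: mn.
- have wL : w \in L by case/andP: mn.
  have wx : forall i, lte w (wmul w (wvar i)).
    move=> i; apply: (lte_mulr adm); apply/eqP=> /ffunP /(_ i).
    by rewrite !ffunE eqxx.
  split.
  + move=> a b; rewrite mem_rcons inE mem_undup mem_cat mem_filter.
    move=> /orP[/eqP->|aN] /orP[/andP[bw bL]|/mapP[i _ ->]].
    * exact: min_inP mn bL bw.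
    * exact: wx.
    * exact: i1.
    * exact: (lte_trans adm (i1 _ _ aN wL) (wx i)).
  + move=> a b; rewrite !mem_rcons !inE.
    have nw : forall x, x \in N -> syn x != syn w.
      by move=> x xN; apply/negP=> /eqP e; case/negP: nh; apply/hasP; exists x => //; rewrite e.
    move=> /orP[/eqP->|aN] /orP[/eqP->|bN] // e.
    * by have := nw _ bN; rewrite e eqxx.
    * by have := nw _ aN; rewrite e eqxx.
    * exact: i2.
  + move=> g gG; have [? ? ?] := i3 g gG; split=> //.
    by rewrite mem_rcons inE; apply/orP; right.
Qed.

Lemma inv_star S S' : star (stepR H prec) S S' -> invR S -> invR S'.
Proof. by elim=> // a b c st _ IH /(inv_step st). Qed.


Lemma wdvd_refl (w : word n) : wdvd w w.
Proof. by apply/forallP=> i. Qed.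

Section Final.
Variables (Nf : seq (word n)) (Gf : seq (word n * word n)).
Notation step := (stepR H prec).
Let F : stateR n := ([::], Nf, Gf).

Definition Rst (S : stateR n) := let: (L, N, G) := S in
  [/\ {subset N <= Nf}, {subset G <= Gf} &
      forall x, x \in L -> x \in Nf \/ has (fun g => wdvd g.1 x) Gf].

Lemma R_star S F' : star step S F' -> F' = F -> Rst S.
Proof.
elim=> [a ->|a b c st _ IH /IH {IH}]; first by split.
case: st => {a b} [L N G w mn hw|L N G w w' mn _ w'N sy|L N G w mn _ nh] [sN sG sL].
- split=> // x xL; case: (eqVneq x w) => [->|xw].
    right; case/hasP: hw => g gG dg; apply/hasP; exists g => //; exact: sG.
  by apply: sL; rewrite mem_filter /= xw.
- split=> //.
  + by move=> g gG; apply: sG; rewrite mem_rcons inE gG orbT.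
  + move=> x xL; case: (eqVneq x w) => [->|xw].
      right; apply/hasP; exists (w, w'); last exact: wdvd_refl.
      by apply: sG; rewrite mem_rcons inE eqxx.
    by apply: sL; rewrite mem_filter /= xw.
- split=> //.
  + by move=> x xN; apply: sN; rewrite mem_rcons inE xN orbT.
  + move=> x xL; case: (eqVneq x w) => [->|xw].
      by left; apply: sN; rewrite mem_rcons inE eqxx.
    by apply: sL; rewrite mem_undup mem_cat mem_filter /= xw xL.
Qed.

Definition Wst F' (S : stateR n) := forall x, x \in S.1.2 ->
  exists S'', star step S'' F' /\ forall i, wmul x (wvar i) \in S''.1.1.

Lemma W_star S F' : star step S F' -> Wst F' S -> Wst F' F'.
Proof.
elim=> // a b c st stc IH Wa; apply: IH => x.
case: st Wa stc => {a b} [L N G w mn hw|L N G w w' mn _ w'N sy|L N G w mn _ nh] Wa stc //=.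
- exact: Wa.
- exact: Wa.
rewrite mem_rcons inE => /orP[/eqP->|xN]; last exact: Wa.
exists (undup ([seq x <- L | predC1 w x] ++ [seq wmul w (wvar i) | i <- enum 'I_n]), rcons N w, G).
split; first exact: stc.
move=> i /=; rewrite mem_undup mem_cat; apply/orP; right.
by apply: map_f; rewrite mem_enum.
Qed.

End Final.
End Alg.



Lemma F2_cases (x : 'F_2) : x = 0 \/ x = 1.
Proof. case: x => [[|[|k]] Hk]; [left|right|by []]; exact: val_inj. Qed.

Section Vec.
Variable n : nat.
Implicit Types a b e : 'rV['F_2]_n.

Lemma wt_sub a b : (wt (a - b) <= wt a + wt b)%N.
Proof.
rewrite /wt; apply: leq_trans (leq_card_setU _ _); apply: subset_leq_card.
apply/subsetP=> i; rewrite !inE !mxE => h; rewrite -negb_and; apply: contra h.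
by case/andP=> /eqP -> /eqP ->; rewrite subrr.
Qed.

Lemma wt_opp a : wt (- a) = wt a.
Proof. by apply: eq_card => i; rewrite !inE mxE oppr_eq0. Qed.

Lemma wt_gt0 a : a != 0 -> (0 < wt a)%N.
Proof.
move=> a0; rewrite card_gt0; apply/set0Pn.
case: (boolP [exists i, a 0 i != 0]) => [/existsP[i hi]|].
  by exists i; rewrite inE.
move/existsPn=> h; case/eqP: a0; apply/rowP=> j; rewrite mxE.
by apply/eqP; have := h j; rewrite negbK.
Qed.

Definition vword e : word n := [ffun i => nat_of_bool (e 0 i != 0)].

Lemma psi_vword e : psi (vword e) = e.
Proof.
apply/rowP=> i; rewrite !mxE ffunE.
by case: (F2_cases (e 0 i)) => ->.
Qed.

Lemma wt_vword e : wt e = #|Ind (vword e)|.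
Proof. by apply: eq_card => i; rewrite !inE ffunE; case: (e 0 i != 0). Qed.

Lemma vword_std e : wstandard (vword e).
Proof. by apply/forallP=> i; rewrite ffunE; case: (e 0 i != 0). Qed.

Lemma wt_psi (c : word n) : (wt (psi c) <= #|Ind c|)%N.
Proof.
apply: subset_leq_card; apply/subsetP=> i; rewrite !inE mxE.
by case: (c i).
Qed.

End Vec.

Section Main.
Variables n m : nat.
Variable H : 'M['F_2]_(n, m).
Variable prec : rel (word n).
Hypothesis adm : admissible prec.
Variables (Nf : seq (word n)) (Gf : seq (word n * word n)).
Hypothesis out : algR_output H prec Nf Gf.
Notation lte := (lt_e prec).
Notation syn := (syndrome H).

Lemma inv_final : invR H prec ([::], Nf, Gf).
Proof. apply: (inv_star adm out); by split. Qed.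

Lemma syn_mul u v : syn (wmul u v) = syn u + syn v.
Proof. by rewrite /syndrome psi_mul mulmxDl. Qed.

Lemma syn_red w c : star (red1 Gf) w c -> syn w = syn c.
Proof.
have [_ _ i3] := inv_final.
elim=> // a b c' r _ <-; case: r => [x _|u u' s _ g].
  by rewrite /syndrome psi_std.
by rewrite !syn_mul; have [_ -> _] := i3 _ g.
Qed.

Lemma F3 k c : (#|Ind c| < k)%N -> wstandard c ->
  ~~ has (fun g => wdvd g.1 c) Gf -> c \in Nf.
Proof.
have RS : forall S, star (stepR H prec) S ([::], Nf, Gf) -> Rst Nf Gf S.
  by move=> S st; apply: (R_star st (erefl _)).
have W := W_star out (fun x (h : x \in [::]) => False_ind _ (notF h)).
elim: k c => // k IH c ck st nd.
case: (eqVneq #|Ind c| 0%N) => [c0|c0].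
  have c1 : c = wone n.
    apply/ffunP=> i; rewrite ffunE; apply/eqP; rewrite eqn0Ngt.
    by apply/negP=> ci; have /setP/(_ i) := cards0_eq c0; rewrite !inE ci.
  subst c; have [_ _ /(_ (wone n))] := RS _ out.
  case; first by rewrite inE.
    by [].
  by move=> hh; rewrite hh in nd.
have [i ii] : exists i, i \in Ind c.
  by apply/set0Pn; rewrite -card_gt0 lt0n.
set c' : word n := [ffun j => if j == i then 0%N else c j].
have ce : c = wmul c' (wvar i).
  apply/ffunP=> j; rewrite !ffunE; case: eqP => [->|] /=; last by rewrite addn0.
  move: ii; rewrite inE; move/forallP: st => /(_ i).
  by case: (c i) => [|[|]].
have Ie : Ind c' = Ind c :\ i.
  by apply/setP=> j; rewrite !inE ffunE; case: eqP.
have c'k : (#|Ind c'| < k)%N.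
  by move: ck; rewrite (cardsD1 i (Ind c)) ii Ie.
have c'st : wstandard c'.
  apply/forallP=> j; rewrite ffunE; case: eqP => // _.
  by move/forallP: st => /(_ j).
have c'nd : ~~ has (fun g => wdvd g.1 c') Gf.
  apply: contra nd => /hasP[g gG dg]; apply/hasP; exists g => //.
  apply/forallP=> j; move/forallP: dg => /(_ j); rewrite ffunE.
  by case: eqP => // _ /leq_trans; apply.
have /W [[[L N] G] [stS hS]] := IH c' c'k c'st c'nd.
have [_ _ /(_ (wmul c' (wvar i)) (hS i))] := RS _ stS.
rewrite -ce; case=> // hh; by rewrite hh in nd.
Qed.


Definition fromB (b : {ffun 'I_n -> bool}) : word n := [ffun i => nat_of_bool (b i)].
Definition rank (v : word n) := #|[set b : {ffun 'I_n -> bool} | lte (fromB b) v]|.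

Lemma rank_lt x y : wstandard x -> lte x y -> (rank x < rank y)%N.
Proof.
move=> st xy.
have fx : fromB [ffun i => (0 < x i)%N] = x.
  apply/ffunP=> i; rewrite !ffunE; move/forallP: st => /(_ i).
  by case: (x i) => [|[|]].
apply: proper_card; apply/properP; split.
  apply/subsetP=> b; rewrite !inE => h; exact: (lte_trans adm h xy).
exists [ffun i => (0 < x i)%N]; first by rewrite inE fx.
by rewrite inE fx (negbTE (lte_irr adm x)).
Qed.

Lemma Pmin c : c \in Nf -> forall k v, (rank v < k)%N -> wstandard v ->
  syn v = syn c -> c = v \/ lte c v.
Proof.
move=> cN; have [_ i2 i3] := inv_final.
elim=> // k IH v vk st sv.
case: (boolP (v \in Nf)) => [vN|vN]; first by left; apply: i2 => //.
have : has (fun g => wdvd g.1 v) Gf.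
  apply/negPn; apply: contra vN; exact: (@F3 #|Ind v|.+1).
case/hasP=> [[u u'] gG /= dg].
have [u'N su lu] := i3 _ gG; rewrite /= in u'N su lu.
have ve := wdvd_mul dg; set s := [ffun _ => _] in ve.
have lv : lte (wstd (wmul u' s)) v.
  rewrite ve; apply: (lte_mul_std adm lu); by rewrite -ve.
have rv := rank_lt (wstd_standard _) lv.
have sv' : syn (wstd (wmul u' s)) = syn c.
  by rewrite -sv ve /syndrome psi_std -/(syndrome _ _) syn_mul su -syn_mul.
have [e|l] := IH _ (leq_trans rv vk) (wstd_standard _) sv'.
  by right; rewrite e.
by right; exact: (lte_trans adm l lv).
Qed.

End Main.

Unset Implicit Arguments.
Set Strict Implicit.

Theorem theorem5p1 (n m : nat) (H : 'M['F_2]_(n, m)) (d : nat)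
    (prec : rel (word n)) (N : seq (word n)) (G : seq (word n * word n))
    (w c : word n) :
  is_min_distance H d -> admissible prec -> algR_output H prec N G ->
  is_Can G w c ->
  let t := (d.-1)./2 in
  ((wt (psi c) <= t)%N ->
     in_ball H t (psi w) /\
     (psi w - psi c \in code H) /\
     (forall e : 'rV['F_2]_n, (wt e <= t)%N -> psi w - e \in code H -> e = psi c)) /\
  ((t < wt (psi c))%N -> ~ in_ball H t (psi w)).
Proof.
move=> [_ md] adm out [red irr] t.
have sy := syn_red adm out red.
have hd := odd_double_half d.-1; rewrite -addnn in hd.
have codeP : forall x y : 'rV['F_2]_n, (x - y \in code H) = (x *m H == y *m H).
  by move=> x y; rewrite inE mulmxBl subr_eq0.
have wc : psi w - psi c \in code H by rewrite codeP; apply/eqP; exact: sy.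
split.
  move=> ct; split; last split => //.
    exists (psi w - psi c) => //; by rewrite /hdist addrAC subrr add0r wt_opp.
  move=> e et ec; apply/eqP; rewrite -subr_eq0; apply/negP => /negP nz.
  have ce : e - psi c \in code H.
    by move: ec wc; rewrite !codeP => /eqP <- /eqP ->.
  rewrite /t in et ct.
  have z1 := leq_trans (wt_sub e (psi c)) (leq_add et ct).
  have z2 := md _ ce nz; have z3 : (0 < wt (e - psi c))%N := wt_gt0 nz.
  move: z1 z2 z3 hd; generalize (wt (e - psi c)) (d.-1./2) (nat_of_bool (odd d.-1)) => k h o.
  clear; case: d => [|d] /=; lia.

move=> ct [c0 c0C hc].
have cst : wstandard c.
  case: (boolP (wstandard c)) => // ns; case: (irr _ (red1_std G ns)).
have cnd : ~~ has (fun g => wdvd g.1 c) G.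
  apply/negP => /hasP [[u u'] gG dg]; have ce := wdvd_mul dg.
  move: ce; set s := [ffun _ => _] => ce.
  apply: (irr (wmul u' s)); rewrite {1}ce; apply: red1_bin => //; by rewrite -ce.
have cN : c \in N := F3 out (ltnSn _) cst cnd.
set e := psi w - c0.
have we : wt e = hdist c0 (psi w) by rewrite /hdist -wt_opp opprB.
have se : syndrome H (vword e) = syndrome H c.
  rewrite /syndrome psi_vword -/(syndrome H c) -sy /syndrome /e mulmxBl.
  by move: c0C; rewrite inE => /eqP ->; rewrite subr0.
have hI : (#|Ind c| <= #|Ind (vword e)|)%N.
  case: (Pmin adm out cN (ltnSn _) (vword_std e) se) => [<-//|].
  by rewrite /lt_e => /orP[/ltnW|/andP[/eqP-> _]].
have := wt_psi c; rewrite -wt_vword in hI; rewrite /t in ct hc; lia.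
Qed.
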